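(* There is an absolute constant $C$ such that for every odd prime $p$ and every integer $n\ge2$, if $D$ and $X$ are independent and uniform on $\{0,1\}^{n-1}$ and $S=\sum_{i=1}^{n-1}X_i(-1)^{h(D)_i}$, then $$\mathbb{E}\big[q_p(S)\big]\le\tfrac12-\tfrac1\pi+\tfrac1{2p}+Cp^{3/2}e^{-n/(4p^2)},$$ where for an integer $k$, $q_p(k)=\sin^2(-\tfrac\pi4+\tfrac\pi pk)$ if $(k\bmod p)<p/2$ and $q_p(k)=\cos^2(-\tfrac\pi4+\tfrac\pi pk)$ otherwise.
   Context: $k\bmod p\in\{0,\dots,p-1\}$. Binary tree $B_n$: vertices $v_0,\dots,v_{n-1}$, root $v_0$; for $i\ge1$ the parent of $v_i$ is $v_{\lfloor(i-1)/2\rfloor}$ and $e_i$ joins $v_i$ to its parent. For $d\in\{0,1\}^{n-1}$, $h(d)_i=\bigoplus_{j:\,e_j\text{ on the path from }v_0\text{ to }v_i}d_j$. *)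

(* Defs.v *)
From Stdlib Require Import Reals ZArith Znumtheory List Lia.
Open Scope R_scope.

Fixpoint all_bits (m : nat) : list (list bool) :=
  match m with
  | O => nil :: nil
  | S m' => flat_map (fun l => (false :: l) :: (true :: l) :: nil) (all_bits m')
  end.

(* Edge label d_j (1 <= j <= n-1) of the vector d = [d_1; ...; d_{n-1}]. *)
Definition bit (d : list bool) (j : nat) : bool := nth (j - 1) d false.

(* h(d)_i : xor of d_j over edges e_j on the path from v_0 to v_i in B_n.
   Parent of v_i (i >= 1) is v_{(i-1)/2}. Fuel i suffices since the parent index is < i. *)
Fixpoint h_fuel (fuel : nat) (d : list bool) (i : nat) : bool :=
  match fuel with
  | O => false
  | S f => match i with
           | O => false
           | S _ => xorb (bit d i) (h_fuel f d (Nat.div (i - 1) 2))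
           end
  end.
Definition h (d : list bool) (i : nat) : bool := h_fuel i d i.

Definition S_val (n : nat) (d x : list bool) : Z :=
  fold_right Z.add 0%Z
    (map (fun i => (if bit x i then 1 else 0) * (if h d i then -1 else 1))%Z
         (seq 1 (n - 1))).

Definition q (p k : Z) : R :=
  if Rlt_dec (IZR (Z.modulo k p)) (IZR p / 2)
  then (sin (- (PI / 4) + PI / IZR p * IZR k)) ^ 2
  else (cos (- (PI / 4) + PI / IZR p * IZR k)) ^ 2.

Definition sumR (l : list R) : R := fold_right Rplus 0 l.

Definition expect_q (p : Z) (n : nat) : R :=
  sumR (flat_map (fun d => map (fun x => q p (S_val n d x)) (all_bits (n - 1)))
                 (all_bits (n - 1)))
  / (2 ^ (n - 1) * 2 ^ (n - 1)).

(* Main.v *)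
Require Import Defs.
From Stdlib Require Import Reals ZArith Znumtheory List Lia Lra.
Open Scope R_scope.

Fixpoint sumN (f : nat -> R) (n : nat) : R :=
  match n with O => 0 | S n' => sumN f n' + f n' end.
Definition sumZ (f : Z -> R) (n : nat) : R := sumN (fun r => f (Z.of_nat r)) n.

Lemma sumN_ext f g n : (forall r, (r < n)%nat -> f r = g r) -> sumN f n = sumN g n.
Proof. induction n; simpl; intros; auto. rewrite IHn by (intros; apply H; lia). rewrite H by lia. auto. Qed.

Lemma sumN_lin3 a b c f g h n :
  sumN (fun r => a * f r + b * g r + c * h r) n = a * sumN f n + b * sumN g n + c * sumN h n.
Proof. induction n; simpl. ring. rewrite IHn. ring. Qed.

Lemma sumN_const c n : sumN (fun _ => c) n = INR n * c.
Proof. induction n; simpl sumN. simpl; ring. rewrite IHn, S_INR. ring. Qed.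

Lemma sumN_le f g n : (forall r, (r < n)%nat -> f r <= g r) -> sumN f n <= sumN g n.
Proof. induction n; simpl; intros. lra. assert (f n <= g n) by (apply H; lia).
  assert (sumN f n <= sumN g n) by (apply IHn; intros; apply H; lia). lra. Qed.

Lemma sumN_nonneg f n : (forall r, (r < n)%nat -> 0 <= f r) -> 0 <= sumN f n.
Proof. intros. rewrite <- (Rmult_0_r (INR n)). rewrite <- sumN_const. apply sumN_le; auto. Qed.

Lemma sumN_mono_n f m n : (forall r, 0 <= f r) -> (m <= n)%nat -> sumN f m <= sumN f n.
Proof. intros H Hmn. induction Hmn. lra. simpl. specialize (H m0). lra. Qed.

Lemma sumN_term f i n : (forall r, 0 <= f r) -> (i < n)%nat -> f i <= sumN f n.
Proof. intros. apply Rle_trans with (sumN f (S i)). simpl.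
  pose proof (sumN_nonneg f i (fun r _ => H r)). lra. apply sumN_mono_n; auto. Qed.

Lemma sumN_shift a n : sumN (fun r => a (S r)) n + a O = sumN a n + a n.
Proof. induction n; simpl. ring. lra. Qed.

Lemma sumN_id n : sumN INR n = INR n * (INR n - 1) / 2.
Proof. induction n; simpl sumN. simpl; field. rewrite IHn, S_INR. field. Qed.

Definition periodic (P : nat) (F : Z -> R) := forall z, F (z + Z.of_nat P)%Z = F z.

Lemma shift1 P f : periodic P f -> sumZ (fun z => f (z + 1)%Z) P = sumZ f P.
Proof. intros H. unfold sumZ.
  pose proof (sumN_shift (fun r => f (Z.of_nat r)) P) as E. cbv beta in E.
  assert (f (Z.of_nat P) = f (Z.of_nat 0)) by (change (Z.of_nat 0) with 0%Z; rewrite <- (H 0%Z); reflexivity).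
  replace (sumN (fun r => f (Z.of_nat r + 1)%Z) P) with (sumN (fun r : nat => f (Z.of_nat (S r))) P).
  lra. apply sumN_ext; intros. f_equal. lia. Qed.

Lemma shiftm1 P f : periodic P f -> sumZ (fun z => f (z - 1)%Z) P = sumZ f P.
Proof. intros H. assert (Hg : periodic P (fun z => f (z - 1)%Z)).
  { intros z. rewrite <- (H (z-1)%Z). f_equal. lia. }
  pose proof (shift1 P _ Hg) as E. rewrite <- E. unfold sumZ. apply sumN_ext; intros. f_equal. lia. Qed.

Lemma shift_e P f e : periodic P f -> (e = 1 \/ e = -1)%Z -> sumZ (fun z => f (z + e)%Z) P = sumZ f P.
Proof. intros H [->| ->]. apply shift1; auto. rewrite <- (shiftm1 P f H). unfold sumZ.
  apply sumN_ext; intros. f_equal. Qed.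

Lemma cs_tel (g : Z -> R) r :
  (g (Z.of_nat r) - g 0%Z)^2 <= INR r * sumN (fun k => (g (Z.of_nat k + 1)%Z - g (Z.of_nat k))^2) r.
Proof. induction r. simpl. lra.
  simpl sumN. replace (Z.of_nat (S r)) with (Z.of_nat r + 1)%Z by lia. rewrite S_INR.
  set (S0 := g (Z.of_nat r) - g 0%Z) in *. set (d := g (Z.of_nat r + 1)%Z - g (Z.of_nat r)).
  set (Q := sumN _ r) in *.
  assert (HQ : 0 <= Q). { apply sumN_nonneg. intros. apply pow2_ge_0. }
  replace (g (Z.of_nat r + 1)%Z - g 0%Z) with (S0 + d) by (unfold S0, d; ring).
  pose proof (pos_INR r) as Hr. destruct (Req_dec (INR r) 0) as [E|E].
  - rewrite E in IHr. rewrite E. assert (S0 = 0) by nra. rewrite H. nra.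
  - assert (0 < INR r) by lra.
    assert (INR r * (Q + INR r * d^2 - 2 * S0 * d) >= 0) by (pose proof (pow2_ge_0 (S0 - INR r * d)); simpl in *; nra).
    assert (Q + INR r * d^2 - 2 * S0 * d >= 0).
    { destruct (Rle_dec 0 (Q + INR r * d^2 - 2 * S0 * d)); [lra|]. nra. }
    nra. Qed.

Lemma poincare P g : (1 <= P)%nat -> sumZ g P = 0 ->
  sumZ (fun z => g z ^ 2) P <= INR P ^ 2 / 2 * sumZ (fun z => (g (z + 1)%Z - g z) ^ 2) P.
Proof. intros HP H0. unfold sumZ in *.
  set (D := sumN (fun r => (g (Z.of_nat r + 1)%Z - g (Z.of_nat r)) ^ 2) P).
  set (c := g 0%Z).
  assert (E : sumN (fun r => (g (Z.of_nat r) - c)^2) P = sumN (fun r => g (Z.of_nat r) ^ 2) P + INR P * c^2).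
  { rewrite (sumN_ext _ (fun r => 1 * (g (Z.of_nat r) ^2) + (-2*c) * g (Z.of_nat r) + c^2 * 1)).
    rewrite sumN_lin3, H0, sumN_const. ring. intros; ring. }
  assert (HD : 0 <= D) by (apply sumN_nonneg; intros; apply pow2_ge_0).
  assert (B : sumN (fun r => (g (Z.of_nat r) - c)^2) P <= sumN (fun r => INR r * D) P).
  { apply sumN_le. intros. eapply Rle_trans. apply cs_tel. apply Rmult_le_compat_l. apply pos_INR.
    apply sumN_mono_n. intros; apply pow2_ge_0. lia. }
  assert (E2 : sumN (fun r => INR r * D) P = D * sumN INR P + 0 * sumN INR P + 0 * sumN INR P).
  { rewrite <- sumN_lin3. apply sumN_ext. intros; ring. }
  rewrite E2, sumN_id in B.
  assert (0 <= INR P * c^2) by (apply Rmult_le_pos; [apply pos_INR| apply pow2_ge_0]).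
  fold D. assert (1 <= INR P) by (apply (le_INR 1); auto). nra. Qed.

Definition rho (P : nat) := 1 - 1 / (2 * INR P ^ 2).

Lemma contraction P g e : (1 <= P)%nat -> periodic P g -> sumZ g P = 0 -> (e = 1 \/ e = -1)%Z ->
  sumZ (fun z => ((g z + g (z + e)%Z) / 2) ^ 2) P <= rho P * sumZ (fun z => g z ^ 2) P.
Proof. intros HP Hg H0 He.
  set (N := sumZ (fun z => g z ^ 2) P).
  set (D := sumZ (fun z => (g (z + 1)%Z - g z) ^ 2) P).
  assert (HN : sumZ (fun z => g (z + e)%Z ^ 2) P = N).
  { apply (shift_e P (fun z => g z ^ 2)); auto. intros z; simpl; rewrite Hg; auto. }
  assert (HDe : sumZ (fun z => (g z - g (z + e)%Z) ^ 2) P = D).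
  { destruct He as [-> | ->].
    - unfold sumZ, D. apply sumN_ext; intros; ring.
    - unfold D; rewrite <- (shiftm1 P (fun z => (g (z + 1)%Z - g z) ^ 2)).
      + unfold sumZ. apply sumN_ext; intros. replace (Z.of_nat r - 1 + 1)%Z with (Z.of_nat r) by lia.
        replace (Z.of_nat r + -1)%Z with (Z.of_nat r - 1)%Z by lia. ring.
      + intros z. simpl. replace (z + Z.of_nat P + 1)%Z with (z + 1 + Z.of_nat P)%Z by lia.
        rewrite !Hg. auto. }
  assert (E : sumZ (fun z => ((g z + g (z + e)%Z) / 2) ^ 2) P = N / 2 + N / 2 - D / 4).
  { rewrite <- HN at 2. rewrite <- HDe. unfold N, sumZ.
    transitivity (/2 * sumN (fun r => g (Z.of_nat r) ^ 2) P + /2 * sumN (fun r => g (Z.of_nat r + e)%Z ^ 2) P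
       + (-/4) * sumN (fun r => (g (Z.of_nat r) - g (Z.of_nat r + e)%Z) ^ 2) P).
    rewrite <- sumN_lin3. apply sumN_ext. intros. field. field. }
  rewrite E. pose proof (poincare P g HP H0). fold N D in H.
  assert (1 <= INR P) by (apply (le_INR 1); auto).
  unfold rho. assert (0 < INR P ^ 2) by nra.
  assert (D >= 2 * N / INR P ^ 2).
  { apply Rle_ge. apply Rmult_le_reg_r with (INR P ^ 2 / 2). nra. unfold Rdiv. 
    replace (2 * N * / INR P ^ 2 * (INR P ^ 2 * / 2)) with N by (field; lra). lra. }
  assert (N / (2 * INR P ^ 2) = (2 * N / INR P ^ 2) / 4) by (field; lra).
  unfold Rdiv in *. nra. Qed.

Definition meanF P F := sumZ F P / INR P.
Definition varF P F := sumZ (fun z => (F z - meanF P F) ^ 2) P.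
Definition Top (e : Z) (F : Z -> R) (z : Z) := (F z + F (z + e)%Z) / 2.

Lemma periodic_T P e F : periodic P F -> periodic P (Top e F).
Proof. intros H z. unfold Top. replace (z + Z.of_nat P + e)%Z with (z + e + Z.of_nat P)%Z by lia.
  rewrite !H. auto. Qed.

Lemma sumZ_T P e F : periodic P F -> (e = 1 \/ e = -1)%Z -> sumZ (Top e F) P = sumZ F P.
Proof. intros H He. unfold Top. 
  transitivity (/2 * sumZ F P + /2 * sumZ (fun z => F (z+e)%Z) P + 0 * sumZ F P).
  unfold sumZ. rewrite <- sumN_lin3. apply sumN_ext; intros; field.
  rewrite shift_e; auto. field. Qed.

Lemma mean_T P e F : periodic P F -> (e = 1 \/ e = -1)%Z -> meanF P (Top e F) = meanF P F.
Proof. intros. unfold meanF. rewrite sumZ_T; auto. Qed.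

Lemma var_T P e F : (1 <= P)%nat -> periodic P F -> (e = 1 \/ e = -1)%Z ->
  varF P (Top e F) <= rho P * varF P F.
Proof. intros HP H He. unfold varF. rewrite mean_T; auto.
  set (m := meanF P F). set (g := fun z => F z - m).
  assert (Hg : periodic P g) by (intros z; unfold g; rewrite H; auto).
  assert (Hs : sumZ g P = 0).
  { unfold g, m, meanF, sumZ. rewrite (sumN_ext _ (fun r => 1 * F (Z.of_nat r) + (- (sumN (fun r => F (Z.of_nat r)) P / INR P)) * 1 + 0 * 1)) by (intros; ring).
    rewrite sumN_lin3, sumN_const. assert (1 <= INR P) by (apply (le_INR 1); auto). field. lra. }
  pose proof (contraction P g e HP Hg Hs He). unfold g in H0.
  unfold sumZ in *. rewrite (sumN_ext _ (fun r => ((F (Z.of_nat r) - m + (F (Z.of_nat r + e)%Z - m)) / 2) ^ 2)).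
  exact H0. intros. unfold Top. field. Qed.

Lemma rho_pos P : (1 <= P)%nat -> 0 <= rho P.
Proof. intros. unfold rho. assert (1 <= INR P) by (apply (le_INR 1); auto).
  assert (1 <= INR P ^ 2) by nra. assert (1/(2*INR P^2) <= 1/2).
  { unfold Rdiv. rewrite !Rmult_1_l. apply Rinv_le_contravar; lra. } lra. Qed.

Lemma var_nonneg P F : 0 <= varF P F.
Proof. apply sumN_nonneg. intros; apply pow2_ge_0. Qed.

Definition V (s : nat -> Z) (m : nat) (x : list bool) : Z :=
  fold_right Z.add 0%Z (map (fun i => ((if nth (i - 1) x false then 1 else 0) * s i)%Z) (seq 1 m)).

Lemma V_cons s m b l : V s (S m) (b :: l) = ((if b then 1 else 0) * s 1%nat + V (fun i => s (S i)) m l)%Z.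
Proof. unfold V. simpl seq. simpl map. simpl fold_right. f_equal.
  rewrite <- seq_shift, map_map. f_equal. apply map_ext_in. intros i Hi.
  apply in_seq in Hi. destruct i. lia. simpl. replace (i - 0)%nat with i by lia. auto. Qed.

Definition Avg s m (F : Z -> R) := sumR (map (fun x => F (V s m x)) (all_bits m)).

Lemma sumR_app a b : sumR (a ++ b) = sumR a + sumR b.
Proof. induction a; simpl. ring. rewrite IHa. ring. Qed.

Lemma sumR_scal c (f : list bool -> R) L : sumR (map (fun x => c * f x) L) = c * sumR (map f L).
Proof. induction L; simpl. ring. rewrite IHL. ring. Qed.

Lemma sumR_flat2 (f : list bool -> R) a b (L : list (list bool)) :
  sumR (map f (flat_map (fun l => a l :: b l :: nil) L)) = sumR (map (fun l => f (a l) + f (b l)) L).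
Proof. induction L; simpl. auto. rewrite IHL. ring. Qed.

Lemma Avg_S s m F : Avg s (S m) F = 2 * Avg (fun i => s (S i)) m (Top (s 1%nat) F).
Proof. unfold Avg. simpl all_bits. rewrite sumR_flat2. rewrite <- sumR_scal. f_equal.
  apply map_ext. intros l. rewrite !V_cons. unfold Top.
  replace ((0 * s 1%nat + V (fun i => s (S i)) m l))%Z with (V (fun i => s (S i)) m l) by lia.
  replace ((1 * s 1%nat + V (fun i => s (S i)) m l))%Z with (V (fun i => s (S i)) m l + s 1%nat)%Z by lia.
  field. Qed.

Lemma ML P : (1 <= P)%nat -> forall m s F, (forall i, s i = 1 \/ s i = -1)%Z -> periodic P F ->
  (Avg s m F / 2 ^ m - meanF P F) ^ 2 <= rho P ^ m * varF P F.
Proof. intros HP m. induction m; intros s F Hs HF.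
  - unfold Avg. simpl. unfold V. simpl fold_right. simpl sumR.
    replace ((F 0%Z + 0) / 1 - meanF P F) with (F (Z.of_nat 0) - meanF P F) by (simpl; field).
    rewrite Rmult_1_l. match goal with |- ?a * (?a * 1) <= _ => replace (a * (a * 1)) with (a ^ 2) by ring end. unfold varF, sumZ.
    apply (sumN_term (fun r => (F (Z.of_nat r) - meanF P F) ^ 2)). intros; apply pow2_ge_0. lia.
  - rewrite Avg_S. specialize (IHm (fun i => s (S i)) (Top (s 1%nat) F) (fun i => Hs (S i)) (periodic_T P _ F HF)).
    rewrite mean_T in IHm by auto.
    replace (2 * Avg (fun i => s (S i)) m (Top (s 1%nat) F) / 2 ^ S m) with (Avg (fun i => s (S i)) m (Top (s 1%nat) F) / 2 ^ m)
      by (simpl; field; apply pow_nonzero; lra).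
    eapply Rle_trans. apply IHm. simpl.
    pose proof (var_T P (s 1%nat) F HP HF (Hs 1%nat)). pose proof (pow_le _ m (rho_pos P HP)).
    rewrite (Rmult_comm (rho P)), Rmult_assoc. apply Rmult_le_compat_l; auto. Qed.

Lemma sin_le_id a : 0 <= a -> a <= PI -> sin a <= a.
Proof. intros. destruct (sin_bound a 0 H H0) as [_ H1].
 replace (sin_approx a (2 * (0 + 1))) with (a - a^3/6 + a^5/120) in H1.
 2:{ unfold sin_approx, sin_term; simpl. unfold Rdiv. simpl. field. }
 assert (0 <= a^3) by (apply pow_le; lra). pose proof PI_4.
 assert (a^5/120 <= a^3/6). { replace (a^5) with (a^3*(a*a)) by ring. 
  assert (a*a <= 16) by nra. unfold Rdiv. nra. } lra. Qed.
Lemma cos_ge a : - PI / 2 <= a -> a <= PI / 2 -> 1 - a^2/2 <= cos a.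
Proof. intros. destruct (cos_bound a 0 H H0) as [H1 _].
 replace (cos_approx a (2 * 0 + 1)) with (1 - a^2/2) in H1. lra.
 unfold cos_approx, cos_term; simpl. unfold Rdiv. simpl. field. Qed.

Lemma s2sq : (1 / sqrt 2) * (1 / sqrt 2) = 1/2.
Proof. assert (sqrt 2 * sqrt 2 = 2) by (apply sqrt_sqrt; lra).
  assert (sqrt 2 <> 0) by (intro E; rewrite E in H; lra). 
  replace (1 / sqrt 2 * (1 / sqrt 2)) with (1 / (sqrt 2 * sqrt 2)) by (field; auto). rewrite H. auto. Qed.

Lemma sin_sq_shift t : sin (- (PI / 4) + t) ^ 2 = (1 - sin (2 * t)) / 2.
Proof. rewrite sin_plus, sin_neg, cos_neg, sin_PI4, cos_PI4, sin_2a.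
  pose proof (sin2_cos2 t). unfold Rsqr in H. pose proof s2sq.
  transitivity ((1 / sqrt 2 * (1 / sqrt 2)) * ((sin t * sin t + cos t * cos t) - 2 * sin t * cos t)).
  ring. rewrite H0, H. field. Qed.

Lemma cos_sq_shift t : cos (- (PI / 4) + t) ^ 2 = (1 + sin (2 * t)) / 2.
Proof. rewrite cos_plus, sin_neg, cos_neg, sin_PI4, cos_PI4, sin_2a.
  pose proof (sin2_cos2 t). unfold Rsqr in H. pose proof s2sq.
  transitivity ((1 / sqrt 2 * (1 / sqrt 2)) * ((sin t * sin t + cos t * cos t) + 2 * sin t * cos t)).
  ring. rewrite H0, H. field. Qed.

Lemma q_periodic P : (1 <= P)%nat -> periodic P (q (Z.of_nat P)).
Proof. intros HP z. unfold q.
  replace ((z + Z.of_nat P) mod Z.of_nat P)%Z with (z mod Z.of_nat P)%Z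
    by (replace (z + Z.of_nat P)%Z with (z + 1 * Z.of_nat P)%Z by ring; rewrite Z_mod_plus_full; auto).
  assert (IZR (Z.of_nat P) <> 0) by (rewrite <- INR_IZR_INZ; apply not_0_INR; lia).
  replace (- (PI / 4) + PI / IZR (Z.of_nat P) * IZR (z + Z.of_nat P))
    with ((- (PI / 4) + PI / IZR (Z.of_nat P) * IZR z) + PI) by (rewrite plus_IZR; field; auto).
  rewrite neg_sin, neg_cos. destruct Rlt_dec; ring. Qed.

Lemma q_bounds p z : 0 <= q p z <= 1.
Proof. unfold q. destruct Rlt_dec.
  pose proof (SIN_bound (- (PI / 4) + PI / IZR p * IZR z)). split; [apply pow2_ge_0|]. simpl; nra.
  pose proof (COS_bound (- (PI / 4) + PI / IZR p * IZR z)). split; [apply pow2_ge_0|]. simpl; nra. Qed.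

Definition sig (K r : nat) : R := if (r <=? K)%nat then 1 else -1.

Lemma q_form K r : (r < 2 * K + 1)%nat ->
  q (Z.of_nat (2 * K + 1)) (Z.of_nat r) = 1/2 - sig K r * sin (2 * (PI / INR (2 * K + 1)) * INR r) / 2.
Proof. intros Hr. unfold q. rewrite Z.mod_small by lia. rewrite <- !INR_IZR_INZ.
  replace (2 * (PI / INR (2 * K + 1)) * INR r) with (2 * (PI / INR (2 * K + 1) * INR r)) by ring.
  unfold sig. destruct (Nat.leb_spec r K); destruct Rlt_dec as [H1|H1].
  - rewrite sin_sq_shift. field.
  - exfalso. apply H1. rewrite plus_INR, mult_INR. simpl INR. apply le_INR in H. lra.
  - exfalso. assert (K + 1 <= r)%nat by lia. apply le_INR in H0. rewrite plus_INR in H0.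
    rewrite plus_INR, mult_INR in H1. simpl INR in *. lra.
  - rewrite cos_sq_shift. field. Qed.

Definition cc (b : R) (j : nat) := cos (b * (2 * INR j - 1)).

Lemma tel_step b r : 2 * sin b * sin (2 * b * INR r) = cc b r - cc b (S r).
Proof. unfold cc. rewrite S_INR.
  replace (b * (2 * INR r - 1)) with (2 * b * INR r - b) by ring.
  replace (b * (2 * (INR r + 1) - 1)) with (2 * b * INR r + b) by ring.
  rewrite cos_minus, cos_plus. ring. Qed.

Lemma W_closed K b n : sumN (fun r => sig K r * (cc b r - cc b (S r))) n =
  if (n <=? K + 1)%nat then cc b 0 - cc b n else cc b 0 - 2 * cc b (K + 1) + cc b n.
Proof. induction n. simpl. ring. simpl sumN. rewrite IHn. unfold sig.
  destruct (Nat.leb_spec n (K+1)); destruct (Nat.leb_spec (S n) (K+1)); destruct (Nat.leb_spec n K);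
  try lia; try ring. replace n with (K+1)%nat by lia. ring. Qed.

Lemma T_ident K : (1 <= K)%nat ->
  sumN (fun r => sig K r * sin (2 * (PI / INR (2 * K + 1)) * INR r)) (2 * K + 1) * (2 * sin (PI / INR (2 * K + 1)))
  = 2 * cos (PI / INR (2 * K + 1)) + 2.
Proof. intros HK. set (b := PI / INR (2 * K + 1)).
  assert (Hb : b * INR (2 * K + 1) = PI) by (unfold b; field; apply not_0_INR; lia).
  transitivity (sumN (fun r => sig K r * (cc b r - cc b (S r))) (2 * K + 1)).
  { transitivity (sumN (fun r => (2 * sin b) * (sig K r * sin (2 * b * INR r)) + 0 * 0 + 0 * 0) (2 * K + 1)).
    rewrite sumN_lin3. ring. apply sumN_ext. intros. rewrite <- tel_step. ring. }
  rewrite W_closed. destruct (Nat.leb_spec (2 * K + 1) (K + 1)). lia.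
  assert (E1: INR (2*K+1) = 2*INR K + 1) by (rewrite plus_INR, mult_INR; simpl; ring).
  assert (E2: INR (K+1) = INR K + 1) by (rewrite plus_INR; simpl; ring).
  unfold cc. rewrite E1, E2. rewrite E1 in Hb. clearbody b.
  replace (b * (2 * INR 0 - 1)) with (- b) by (simpl; ring). rewrite cos_neg.
  replace (b * (2 * (INR K + 1) - 1)) with PI by lra. rewrite cos_PI.
  replace (b * (2 * (2 * INR K + 1) - 1)) with (- b + 2 * PI) by lra.
  rewrite cos_plus, cos_neg, sin_neg, cos_2PI, sin_2PI. ring. Qed.

Lemma mean_q K : (1 <= K)%nat ->
  meanF (2 * K + 1) (q (Z.of_nat (2 * K + 1))) <= 1/2 - 1/PI + 1/(2 * INR (2 * K + 1)).
Proof. intros HK. set (P := (2 * K + 1)%nat). set (b := PI / INR P).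
  assert (HP : 3 <= INR P) by (unfold P; rewrite plus_INR, mult_INR; apply (le_INR 1) in HK; simpl INR in *; lra).
  pose proof PI_RGT_0 as Hpi. pose proof PI_4.
  assert (Hb0 : 0 < b) by (unfold b; apply Rdiv_lt_0_compat; lra).
  assert (Hb3 : b <= PI / 3) by (unfold b; apply Rmult_le_compat_l; [lra| apply Rinv_le_contravar; lra]).
  set (T := sumN (fun r => sig K r * sin (2 * b * INR r)) P).
  assert (HT : T * (2 * sin b) = 2 * cos b + 2) by (apply T_ident; auto).
  assert (Hs : 0 < sin b) by (apply sin_gt_0; lra).
  assert (Hs2 : sin b <= b) by (apply sin_le_id; lra).
  assert (Hc : 1 - b^2/2 <= cos b) by (apply cos_ge; lra).
  pose proof (COS_bound b).
  assert (T * sin b = 1 + cos b) by lra.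
  assert (T0 : 0 <= T) by nra.
  assert (T * b >= 2 - b) by nra.
  assert (Hsum : sumZ (q (Z.of_nat P)) P = INR P / 2 - T / 2).
  { unfold sumZ. rewrite (sumN_ext _ (fun r => (-/2) * (sig K r * sin (2 * b * INR r)) + (/2) * 1 + 0 * 0)).
    rewrite sumN_lin3, sumN_const. fold T. field.
    intros. unfold P. rewrite q_form by auto. fold P b. field. }
  unfold meanF. rewrite Hsum.
  assert (T >= 2 * INR P / PI - 1).
  { unfold b in *. apply Rle_ge. 
    apply Rmult_le_reg_r with (PI / INR P). apply Rdiv_lt_0_compat; lra.
    replace ((2 * INR P / PI - 1) * (PI / INR P)) with (2 - PI / INR P) by (field; lra). lra. }
  apply Rmult_le_reg_r with (INR P). lra.
  replace ((INR P / 2 - T / 2) / INR P * INR P) with (INR P / 2 - T / 2) by (field; lra).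
  replace ((1 / 2 - 1 / PI + 1 / (2 * INR P)) * INR P) with (INR P / 2 - INR P / PI + 1/2) by (field; lra).
  assert (2 * INR P / PI = 2 * (INR P / PI)) by (field; lra). lra. Qed.

Lemma exp_le_mono x y : x <= y -> exp x <= exp y.
Proof. intros [H|H]. left; apply exp_increasing; auto. subst; lra. Qed.

Lemma exp_pow_m x m : exp x ^ m = exp (INR m * x).
Proof. induction m. simpl. rewrite Rmult_0_l, exp_0. auto. simpl pow. rewrite IHm, S_INR, <- exp_plus. f_equal. ring. Qed.

Lemma length_all_bits m : length (all_bits m) = (2 ^ m)%nat.
Proof. induction m. auto. simpl all_bits. 
  assert (forall L : list (list bool), length (flat_map (fun l => (false :: l) :: (true :: l) :: nil) L) = (2 * length L)%nat).
  { induction L; simpl; auto. rewrite IHL. lia. }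
  rewrite H, IHm. simpl. lia. Qed.

Lemma sumR_flat_le {A} (f : A -> list R) L c :
  (forall d, sumR (f d) <= c) -> sumR (flat_map f L) <= INR (length L) * c.
Proof. intros H. induction L; simpl flat_map. simpl. lra.
  rewrite sumR_app. simpl length. rewrite S_INR. specialize (H a). lra. Qed.

Lemma var_q_le P : (1 <= P)%nat -> varF P (q (Z.of_nat P)) <= INR P.
Proof. intros HP. unfold varF.
  assert (0 <= meanF P (q (Z.of_nat P)) <= 1).
  { unfold meanF, sumZ. assert (1 <= INR P) by (apply (le_INR 1); auto). split.
    apply Rmult_le_pos. apply sumN_nonneg. intros; apply q_bounds. left; apply Rinv_0_lt_compat; lra.
    apply Rmult_le_reg_r with (INR P). lra. unfold Rdiv. rewrite Rmult_assoc, Rinv_l by lra.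
    rewrite Rmult_1_r, Rmult_1_l. rewrite <- (Rmult_1_r (INR P)). rewrite <- sumN_const.
    apply sumN_le. intros; apply q_bounds. }
  rewrite <- (Rmult_1_r (INR P)). rewrite <- sumN_const. apply sumN_le. intros.
  pose proof (q_bounds (Z.of_nat P) (Z.of_nat r)). simpl. nra. Qed.

Theorem lemma6p6 :
  exists C : R, forall (p : Z) (n : nat),
    prime p -> p <> 2%Z -> (2 <= n)%nat ->
    expect_q p n <= 1/2 - 1/PI + 1/(2 * IZR p)
                    + C * (IZR p) * sqrt (IZR p) * exp (- (INR n) / (4 * (IZR p)^2)).
Proof.
  exists 3. intros p n Hp Hp2 Hn.
  pose proof (prime_ge_2 p Hp) as Hp1.
  assert (Hodd : (p mod 2 = 1)%Z).
  { pose proof (Z.mod_pos_bound p 2). assert (p mod 2 <> 0)%Z.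
    { intro E. apply Zmod_divide in E; [|lia]. destruct (prime_divisors p Hp 2 E) as [?|[?|[?|?]]]; lia. }
    lia. }
  set (K := Z.to_nat (p / 2)).
  assert (HK : (1 <= K)%nat) by (unfold K; pose proof (Z.div_mod p 2); lia).
  assert (Hpe : p = Z.of_nat (2 * K + 1)) by (unfold K; pose proof (Z.div_mod p 2); lia).
  set (P := (2 * K + 1)%nat) in *.
  assert (HP : (1 <= P)%nat) by (unfold P; lia).
  assert (HIP : IZR p = INR P) by (rewrite Hpe, <- INR_IZR_INZ; auto).
  assert (HP1 : 1 <= INR P) by (apply (le_INR 1); auto).
  set (m := (n - 1)%nat).
  set (M := meanF P (q p)). set (X := rho P ^ m * varF P (q p)).
  assert (Hper : periodic P (q p)) by (rewrite Hpe; apply q_periodic; auto).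
  assert (Hd : forall d, sumR (map (fun x => q p (S_val n d x)) (all_bits (n - 1))) <= 2 ^ m * (M + sqrt X)).
  { intros d. set (sd := fun i => if h d i then (-1)%Z else 1%Z).
    assert (Hsd : forall i, sd i = 1%Z \/ sd i = (-1)%Z) by (intros i; unfold sd; destruct (h d i); auto).
    pose proof (ML P HP m sd (q p) Hsd Hper) as H. fold M X in H.
    change (sumR (map (fun x => q p (S_val n d x)) (all_bits (n - 1)))) with (Avg sd m (q p)).
    assert (Avg sd m (q p) / 2 ^ m - M <= sqrt X).
    { eapply Rle_trans. apply Rle_abs. rewrite <- sqrt_Rsqr_abs. apply sqrt_le_1_alt. unfold Rsqr. simpl in H. lra. }
    assert (0 < 2 ^ m) by (apply pow_lt; lra).
    apply Rmult_le_reg_r with (/ 2 ^ m). apply Rinv_0_lt_compat; auto.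
    replace (2 ^ m * (M + sqrt X) * / 2 ^ m) with (M + sqrt X) by (field; lra). unfold Rdiv in H0. lra. }
  assert (HE : expect_q p n <= M + sqrt X).
  { unfold expect_q. fold m.
    assert (0 < 2 ^ m) by (apply pow_lt; lra).
    pose proof (sumR_flat_le _ (all_bits m) _ Hd) as Hfl. rewrite length_all_bits, pow_INR in Hfl.
    replace (INR 2) with 2 in Hfl by (simpl; ring).
    apply Rmult_le_reg_r with (2 ^ m * 2 ^ m). nra. unfold Rdiv. rewrite Rmult_assoc, Rinv_l by nra.
    rewrite Rmult_1_r. eapply Rle_trans; [exact Hfl|right; ring]. }
  assert (HM : M <= 1/2 - 1/PI + 1/(2 * IZR p)).
  { unfold M. rewrite HIP, Hpe. apply mean_q; auto. }
  assert (Hrho : rho P <= exp (- (1 / (2 * INR P ^ 2)))) by (unfold rho; pose proof (exp_ineq1_le (- (1 / (2 * INR P ^ 2)))); lra).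
  assert (Hr0 := rho_pos P HP).
  assert (HX : X <= exp (INR m * (- (1 / (2 * INR P ^ 2)))) * INR P).
  { unfold X. rewrite <- exp_pow_m. apply Rmult_le_compat. apply pow_le; auto. apply var_nonneg.
    apply pow_incr; auto. rewrite Hpe. apply var_q_le; auto. }
  set (y := INR m * (- (1 / (2 * INR P ^ 2))) / 2).
  assert (HsX : sqrt X <= exp y * sqrt (INR P)).
  { eapply Rle_trans. apply sqrt_le_1_alt. apply HX.
    replace (INR m * - (1 / (2 * INR P ^ 2))) with (y + y) by (unfold y; field; lra).
    rewrite exp_plus, sqrt_mult_alt. rewrite sqrt_square. lra. left; apply exp_pos.
    left; apply Rmult_lt_0_compat; apply exp_pos. }
  assert (Hy : exp y <= 3 * exp (- INR n / (4 * INR P ^ 2))).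
  { assert (INR m = INR n - 1) by (unfold m; rewrite minus_INR by lia; simpl; ring).
    assert (y = - INR n / (4 * INR P ^ 2) + 1 / (4 * INR P ^ 2)) by (unfold y; rewrite H; field; lra).
    rewrite H0, exp_plus. pose proof exp_le_3. 
    assert (exp (1 / (4 * INR P ^ 2)) <= exp 1).
    { apply exp_le_mono. apply Rmult_le_reg_r with (4 * INR P ^ 2). nra.
      unfold Rdiv. rewrite Rmult_assoc, Rinv_l by nra. nra. }
    pose proof (exp_pos (- INR n / (4 * INR P ^ 2))). nra. }
  rewrite HIP in *. pose proof (sqrt_pos (INR P)).
  pose proof (exp_pos (- INR n / (4 * INR P ^ 2))). pose proof (exp_pos y).
  assert (sqrt X <= 3 * INR P * sqrt (INR P) * exp (- INR n / (4 * INR P ^ 2))).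
  { eapply Rle_trans. apply HsX.
    assert (exp y * sqrt (INR P) <= 3 * exp (- INR n / (4 * INR P ^ 2)) * sqrt (INR P)) by (apply Rmult_le_compat_r; lra).
    assert (0 <= 3 * exp (- INR n / (4 * INR P ^ 2)) * sqrt (INR P)) by nra.
    nra. }
  lra.
Qed.
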